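(* Let $\Omega\subset\mathbb{R}^d$ be open with Lipschitz boundary, $\pi\in\mathcal M^+(\Omega)$ with $\pi(\Omega)>0$, and let $\varphi:[0,\infty)\to[0,\infty]$ be convex with $\varphi(1)=\varphi'(1)=0$ and $\varphi''(1)=1$. Then there is no constant $c>0$ such that $$\int\Big|\nabla\Big(\varphi'\big(\tfrac{d\mu}{d\pi}\big)\Big)\Big|^2\,d\mu\ \ge\ c\,\mathrm{D}_\varphi(\mu|\pi)$$ holds for all $\mu\in\mathcal M^+(\Omega)$.
   Context: $\mathrm{D}_\varphi(\mu|\nu)=\int\varphi(\frac{d\mu}{d\nu})\,d\nu$ if $\mu\ll\nu$, $+\infty$ otherwise. $\mathcal M^+(\Omega)$: nonnegative finite measures. *)

(* Defs.v *)
From HB Require Import structures.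
From mathcomp Require Import all_boot all_order all_algebra.
From mathcomp Require Import all_classical all_reals all_analysis.
Set Implicit Arguments. Unset Strict Implicit. Unset Printing Implicit Defensive.
Import Order.TTheory GRing.Theory Num.Theory.
Import numFieldNormedType.Exports.
Local Open Scope classical_set_scope.
Local Open Scope ring_scope.

(* R^d is modelled by row vectors 'rV[R]_d; as a measurable space it carries
   the Borel sigma-algebra (generated by the open sets). *)
Notation Rd R d := (g_sigma_algebraType (@open 'rV[R]_d)).

Definition dotv {R : realType} {d : nat} (u v : 'rV[R]_d) : R := (u *m v^T) 0 0.

(* Ω has a Lipschitz boundary: around every boundary point x there is a ball
   B(x,r), a unit direction ν and a Lipschitz function γ of the coordinates
   orthogonal to ν such that Ω ∩ B(x,r) is the strict epigraph of γ in
   direction ν (intersected with B(x,r)). *)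
Definition lipschitz_boundary {R : realType} {d : nat} (O : set 'rV[R]_d) : Prop :=
  forall x : 'rV[R]_d, closure O x -> ~ O x ->
    exists r : R, 0 < r /\
    exists nu : 'rV[R]_d, dotv nu nu = 1 /\
    exists gam : 'rV[R]_d -> R,
      (exists L : R, forall u v, `|gam u - gam v| <= L * `|u - v|) /\
      (forall y, ball x r y ->
         (O y <-> gam (y - dotv y nu *: nu) < dotv y nu)).

Definition grad_norm2 {R : realType} {d : nat} (g : 'rV[R]_d -> R) (x : 'rV[R]_d) : R :=
  \sum_(i < d) (derive g x (delta_mx 0 i)) ^+ 2.

Definition Dphi {R : realType} {dd} {T : measurableType dd}
  (phi : R -> \bar R) (mu pi : {finite_measure set T -> \bar R}) : \bar R :=
  if `[< mu `<< pi >] then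
    (\int[pi]_x phi (fine (Radon_Nikodym (charge_of_finite_measure mu) pi x)))%E
  else (+oo)%E.

(* Main.v *)
Require Import Defs.
From HB Require Import structures.
From mathcomp Require Import all_boot all_order all_algebra.
From mathcomp Require Import all_classical all_reals all_analysis.
From mathcomp Require Import measurable_realfun.
Import Order.TTheory GRing.Theory Num.Theory.
Import numFieldNormedType.Exports.
Local Open Scope classical_set_scope.
Local Open Scope ring_scope.

Lemma exists_k (R : realType) (phi : R -> \bar R) :
  (\forall t \near (1 : R), phi t \is a fin_num) ->
  (\forall t \near (1 : R), derivable (fun s => fine (phi s)) t 1) ->
  derive1 (derive1 (fun s => fine (phi s))) 1 = 1 ->
  exists k, phi k \is a fin_num /\ derivable (fun s => fine (phi s)) k 1 /\ fine (phi k) != 0.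
Proof.
move=> hfin hder h2.
case: (pselect (exists k, phi k \is a fin_num /\ derivable (fun s => fine (phi s)) k 1 /\ fine (phi k) != 0)) => // Hn.
exfalso.
have H0 : \forall t \near (1:R), fine (phi t) = 0.
  near=> t; apply/eqP/negPn/negP => ne; apply: Hn; exists t; split; [near: t; exact: hfin|split => //].
  near: t; exact: hder.
have H1 : \forall t \near (1:R), derive1 (fun s => fine (phi s)) t = 0.
  have := nbhs_interior H0; apply: filterS => t Ht.
  by rewrite derive1E (@near_eq_derive _ _ _ _ (cst 0)) ?derive_cst.
move: h2; rewrite derive1E (@near_eq_derive _ _ _ _ (cst 0)) ?derive_cst //.
by move/eqP; rewrite eq_sym oner_eq0.
Unshelve. all: by end_near.
Qed.

Lemma le_int_nm d (T : measurableType d) (R : realType) (mu : {measure set T -> \bar R})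
  (f g : T -> \bar R) : (forall x, 0 <= f x)%E -> (forall x, f x <= g x)%E ->
  (\int[mu]_x f x <= \int[mu]_x g x)%E.
Proof.
move=> f0 fg.
have g0 : forall x, (0 <= g x)%E by move=> x; exact: le_trans (f0 x) (fg x).
rewrite !ge0_integralTE//.
apply: le_ereal_sup => _ [h hf <-]; exists h => // x; exact: le_trans (hf x) (fg x).
Qed.

Theorem mainTheorem11 (R : realType) (d : nat) (O : set 'rV[R]_d)
  (pi : {finite_measure set (Rd R d) -> \bar R}) (phi : R -> \bar R) :
  open O -> lipschitz_boundary O ->
  pi (~` O) = 0%E -> (0 < pi O)%E ->
  (* φ : [0,∞) → [0,∞], extended by +∞ on (-∞,0) *)
  (forall t, t < 0 -> phi t = +oo%E) ->
  (forall t, 0 <= t -> (0 <= phi t)%E) ->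
  (forall x y l : R, 0 <= x -> 0 <= y -> 0 <= l <= 1 ->
     (phi (l * x + (1 - l) * y)%R <= l%:E * phi x + (1 - l)%R%:E * phi y)%E) ->
  phi 1 = 0%E ->
  (\forall t \near (1 : R), phi t \is a fin_num) ->
  (\forall t \near (1 : R), derivable (fun s => fine (phi s)) t 1) ->
  derive1 (fun s => fine (phi s)) 1 = 0 ->
  derivable (derive1 (fun s => fine (phi s))) 1 1 ->
  derive1 (derive1 (fun s => fine (phi s))) 1 = 1 ->
  ~ (exists c : R, 0 < c /\
      forall (mu : {finite_measure set (Rd R d) -> \bar R}) (rho : Rd R d -> R),
        mu (~` O) = 0%E ->
        (* rho is a version of the density dμ/dπ *)
        measurable_fun setT rho -> (forall x, 0 <= rho x) ->
        (forall A, measurable A -> mu A = (\int[pi]_(x in A) (rho x)%:E)%E) ->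
        (* φ'(rho) is defined and differentiable on O *)
        (forall x, O x -> derivable (fun s => fine (phi s)) (rho x) 1) ->
        (forall x, O x ->
           differentiable (fun y : 'rV[R]_d => derive1 (fun s => fine (phi s)) (rho y)) x) ->
        (\int[mu]_(x in O)
            (grad_norm2 (fun y : 'rV[R]_d => derive1 (fun s => fine (phi s)) (rho y)) x)%:E
          >= c%:E * Dphi phi mu pi)%E).
Proof.
move=> oO _ piO0 piOpos hneg hge0 _ phi1 hfin hder _ _ h2 [c [c0 H]].
have [k [kfin [kder kne0]]] := @exists_k R phi hfin hder h2.
have k0 : 0 <= k.
  rewrite leNgt; apply/negP => /hneg hk; move: kfin; by rewrite hk.
pose mu := mscale (NngNum k0) pi.
have mO : measurable (O : set (Rd R d)) by exact: sub_sigma_algebra.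
have muE : forall A, measurable A -> mu A = (\int[pi]_(x in A) (k%:E))%E.
  by move=> A mA; rewrite integral_cst.
have muO : mu (~` O) = 0%E.
  rewrite /mu /mscale /=; apply/eqP; rewrite mule_eq0 eqe; apply/orP; right; exact/eqP.
have := H mu (fun _ => k) muO (measurable_cst _) (fun _ => k0) muE (fun _ _ => kder)
  (fun x _ => differentiable_cst _ _).
have g0 : forall x, grad_norm2 (fun y : 'rV[R]_d => derive1 (fun s => fine (phi s)) ((fun _ => k) y)) x = 0.
  move=> x; rewrite /grad_norm2 big1 // => i _.
  by rewrite (derive_cst (derive1 (fun s => fine (phi s)) k)) expr0n.
rewrite (eq_integral (fun _ => 0%E)); last by move=> x _; rewrite g0.
rewrite integral0.
apply/negP; rewrite -ltNge.
have phige0 : forall t, (0 <= phi t)%E.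
  move=> t; have [t0|t0] := ltP t 0; first by rewrite (hneg t t0) leey.
  exact: hge0.
have numu : mu `<< pi.
  move=> N hN A mA AN; rewrite /mu /mscale /=; have piA := hN A mA AN.
  apply/eqP; rewrite mule_eq0 eqe; apply/orP; right; exact/eqP.
rewrite /Dphi asboolT //.
set RN := Radon_Nikodym _ _.
have iRN : pi.-integrable setT RN := @Radon_Nikodym_integrable _ _ _ (charge_of_finite_measure mu) pi numu.
have mRN := measurable_int _ iRN.
have ae : ae_eq pi setT RN (cst k%:E).
  apply: integral_ae_eq => //.
  move=> E _ mE; rewrite -Radon_Nikodym_integral //.
  by rewrite /charge_of_finite_measure /mu /mscale integral_cst.
pose S := setT `&` RN @^-1` [set k%:E].
have mS : measurable S by apply: mRN => //; exact: emeasurable_set1.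
pose g' := fun x => (fine (phi k) * \1_S x)%:E.
have mg' := (measurable_EFinP _ _).2 (measurable_funM (measurable_cst (fine (phi k))) (measurable_indic mS)).
rewrite -/g' in mg'.
have aeg : ae_eq pi setT g' (cst (fine (phi k))%:E).
  apply: filterS ae => x h _; rewrite /g' indicE mem_set ?mulr1 //.
  by split => //; exact: h.
have pk : 0 < fine (phi k).
  by rewrite lt_neqAle eq_sym kne0 /= fine_ge0.
have piT : (0 < pi [set: Rd R d])%E.
  apply: (lt_le_trans piOpos).
  exact: (le_measure _ (mem_set mO) (mem_set measurableT) (subsetT _)).
apply: mule_gt0; first by rewrite lte_fin.
apply: (@lt_le_trans _ _ (\int[pi]_x g' x)%E).
  rewrite (ae_eq_integral _ _ measurableT (mg' setT) (measurable_cst _) aeg).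
  by rewrite integral_cst // mule_gt0 // lte_fin.
apply: le_int_nm => x.
  by rewrite /g' lee_fin mulr_ge0 // ?indic_ge0 // ltW.
rewrite /g' indicE; case: (boolP (x \in S)) => [/set_mem [_ /= ->]|_].
  by rewrite mulr1 /= fineK.
by rewrite mulr0.
Qed.
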